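(* Assume $\le_m$ and $\le_s$ are compatible. Then the set $\{LM(sp): sp\in\mathcal{SP}^*\text{ is top-irreducible}\}$ is finite; that is, the top-reduced S-Gröbner basis of $\mathcal{SP}$ is finite up to equivalence (sig-polynomials with the same leading pair being identified).
   Context: Let $k$ be a field, $R=k[x_1,\dots,x_n]$, $\mathcal{M}$ the monoid of monomials, $\mathbf{e}_1,\dots,\mathbf{e}_d$ the standard basis of $R^d$, $\mathcal{M}_d=\{m\mathbf{e}_i\}$, $\lambda\cdot(\mu\mathbf{e}_i)=(\lambda\mu)\mathbf{e}_i$, and $m_1\mathbf{e}_i\mid m_2\mathbf{e}_j$ iff $i=j$ and $m_1\mid m_2$. An admissible monomial order $\le_m$: linear order on $\mathcal{M}$ with $1\le_m m$ and $m_1\le_m m_2\Rightarrow tm_1\le_m tm_2$. An admissible module order $\le_s$: linear order on $\mathcal{M}_d$ with $\mathbf{e}_i\le_s m\mathbf{e}_i$ and $m_1\mathbf{e}_i\le_s m_2\mathbf{e}_i\Rightarrow tm_1\mathbf{e}_i\le_s tm_2\mathbf{e}_i$. Compatible: $\sigma\mathbf{e}_j\le_s\tau\mathbf{e}_j\iff\sigma\le_m\tau$ for all $j,\sigma,\tau$. Fix $f_1,\dots,f_d\in R$. $\mathcal{SP}=\{(\mathbf{u},p)\in R^d\times R:\sum_iu_if_i=p\}$, $\mathcal{SP}^*=\mathcal{SP}\setminus\{(\mathbf{0},0)\}$, $\mathbf{NSP}=\{(\mathbf{u},p)\in\mathcal{SP}:p\ne0\}$. For $(\mathbf{u},p)\in\mathcal{SP}^*$: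 signature $lm(\mathbf{u})$ = $\le_s$-largest element of $\mathcal{M}_d$ in the support of $\mathbf{u}$; $lm(p)$ = $\le_m$-leading monomial ($lm(0)=0$); leading pair $LM(\mathbf{u},p)=(lm(\mathbf{u}),lm(p))$. Relations on leading pairs: $(\mathbf{s}',m')\prec_{m,s}(\mathbf{s},m)$ iff $m',m\ne0$ and $\exists\lambda\in\mathcal{M}$: $\lambda m'=m$, $\lambda\mathbf{s}'<_s\mathbf{s}$. $(\mathbf{s}',m')\prec_{s,m}(\mathbf{s},m)$ iff either ($m',m\ne0$ and $\exists\lambda$: $\lambda\mathbf{s}'=\mathbf{s}$, $\lambda m'<_m m$) or ($m'=0$, $m\ne0$, $\mathbf{s}'\mid\mathbf{s}$). $(\mathbf{s}',m')\mid_{super}(\mathbf{s},m)$ iff either ($m',m\ne0$ and $\exists\lambda$: $\lambda\mathbf{s}'=\mathbf{s}$, $\lambda m'=m$) or ($m'=m=0$ and $\mathbf{s}'\mid\mathbf{s}$). A sig-polynomial $sp\in\mathcal{SP}^*$ is top-irreducible if there is no $sp'\in\mathcal{SP}^*$ with $LM(sp')\prec_{m,s}LM(sp)$ or $LM(sp')\prec_{s,m}LM(sp)$, and no $sp'\in\mathcal{SP}^*$ with $LM(sp')\mid_{super}LM(sp)$ and $LM(sp')\ne LM(sp)$. The top-reduced S-Gröbner basis is the set of top-irreducible sig-polynomials. *)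

(* Defs.v *)
From HB Require Import structures.
From mathcomp Require Import all_boot all_order all_algebra.
Set Implicit Arguments. Unset Strict Implicit. Unset Printing Implicit Defensive.
Import GRing.Theory.

Definition mono (n : nat) := {ffun 'I_n -> nat}.

Definition mone (n : nat) : mono n := [ffun => 0%N].
Definition mmul (n : nat) (a b : mono n) : mono n := [ffun i => (a i + b i)%N].
Definition mdiv (n : nat) (a b : mono n) : bool := [forall i, (a i <= b i)%N].
Definition msub (n : nat) (a b : mono n) : mono n := [ffun i => (a i - b i)%N].

Definition polyf (k : fieldType) (n : nat) := mono n -> k.

Definition is_poly (k : fieldType) (n : nat) (p : polyf k n) : Prop :=
  exists s : seq (mono n), forall m, p m != 0%R -> m \in s.

Definition mono_of (n B : nat) (a : {ffun 'I_n -> 'I_B}) : mono n :=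
  [ffun i => nat_of_ord (a i)].

(* product: (p*q)(m) = sum over divisors a of m of p(a) q(m/a);
   every divisor a of m has a i <= max_j m j, so it is represented
   exactly once by an element of {ffun 'I_n -> 'I_(max+1)}. *)
Definition pmul (k : fieldType) (n : nat) (p q : polyf k n) : polyf k n :=
  fun m => (\sum_(a : {ffun 'I_n -> 'I_((\max_(i < n) m i).+1)}
                 | mdiv (mono_of a) m)
              p (mono_of a) * q (msub m (mono_of a)))%R.

(* ---------- module monomials m e_i, represented as pairs (m, i) ---------- *)
Definition mmono (n d : nat) := (mono n * 'I_d)%type.
Definition smul (n d : nat) (l : mono n) (s : mmono n d) : mmono n d :=
  (mmul l s.1, s.2).
Definition sdiv (n d : nat) (s t : mmono n d) : bool :=
  (s.2 == t.2) && mdiv s.1 t.1.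

Definition linear_order (T : Type) (le : T -> T -> Prop) : Prop :=
  [/\ forall x, le x x,
      forall x y, le x y -> le y x -> x = y,
      forall x y z, le x y -> le y z -> le x z &
      forall x y, le x y \/ le y x].

Definition admissible_monomial_order (n : nat) (leM : mono n -> mono n -> Prop) :=
  [/\ linear_order leM,
      forall m, leM (mone n) m &
      forall t m1 m2, leM m1 m2 -> leM (mmul t m1) (mmul t m2)].

Definition admissible_module_order (n d : nat)
    (leS : mmono n d -> mmono n d -> Prop) :=
  [/\ linear_order leS,
      forall (i : 'I_d) m, leS (mone n, i) (m, i) &
      forall (i : 'I_d) t m1 m2, leS (m1, i) (m2, i) ->
         leS (mmul t m1, i) (mmul t m2, i)].

Definition compatible (n d : nat) (leM : mono n -> mono n -> Prop)
    (leS : mmono n d -> mmono n d -> Prop) :=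
  forall (j : 'I_d) s t, leS (s, j) (t, j) <-> leM s t.

Definition is_sp (k : fieldType) (n d : nat) (f : 'I_d -> polyf k n)
    (u : 'I_d -> polyf k n) (p : polyf k n) : Prop :=
  [/\ forall i, is_poly (u i), is_poly p &
      forall m, (\sum_(i < d) pmul (u i) (f i) m)%R = p m].

Definition is_spstar (k : fieldType) (n d : nat) (f : 'I_d -> polyf k n)
    (u : 'I_d -> polyf k n) (p : polyf k n) : Prop :=
  is_sp f u p /\ ((exists i m, u i m != 0%R) \/ (exists m, p m != 0%R)).

(* leading pairs: (signature, leading monomial), None standing for lm(0)=0 *)
Definition lpair (n d : nat) := (mmono n d * option (mono n))%type.

Definition sig_is (k : fieldType) (n d : nat) (leS : mmono n d -> mmono n d -> Prop)
    (u : 'I_d -> polyf k n) (s : mmono n d) : Prop :=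
  u s.2 s.1 != 0%R /\ forall t : mmono n d, u t.2 t.1 != 0%R -> leS t s.

Definition lm_is (k : fieldType) (n : nat) (leM : mono n -> mono n -> Prop)
    (p : polyf k n) (o : option (mono n)) : Prop :=
  match o with
  | None => forall m, p m = 0%R
  | Some a => p a != 0%R /\ forall m, p m != 0%R -> leM m a
  end.

Definition LM_is (k : fieldType) (n d : nat) (leM : mono n -> mono n -> Prop)
    (leS : mmono n d -> mmono n d -> Prop)
    (u : 'I_d -> polyf k n) (p : polyf k n) (lp : lpair n d) : Prop :=
  sig_is leS u lp.1 /\ lm_is leM p lp.2.

Definition prec_ms (n d : nat) (leS : mmono n d -> mmono n d -> Prop)
    (lp' lp : lpair n d) : Prop :=
  match lp'.2, lp.2 with
  | Some m', Some m =>
      exists l : mono n, mmul l m' = m /\ leS (smul l lp'.1) lp.1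
                         /\ smul l lp'.1 <> lp.1
  | _, _ => False
  end.

Definition prec_sm (n d : nat) (leM : mono n -> mono n -> Prop)
    (lp' lp : lpair n d) : Prop :=
  match lp'.2, lp.2 with
  | Some m', Some m =>
      exists l : mono n, smul l lp'.1 = lp.1 /\ leM (mmul l m') m
                         /\ mmul l m' <> m
  | None, Some _ => sdiv lp'.1 lp.1
  | _, _ => False
  end.

Definition super_div (n d : nat) (lp' lp : lpair n d) : Prop :=
  match lp'.2, lp.2 with
  | Some m', Some m => exists l : mono n, smul l lp'.1 = lp.1 /\ mmul l m' = m
  | None, None => sdiv lp'.1 lp.1
  | _, _ => False
  end.

Definition top_irreducible (k : fieldType) (n d : nat) (f : 'I_d -> polyf k n)
    (leM : mono n -> mono n -> Prop) (leS : mmono n d -> mmono n d -> Prop)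
    (u : 'I_d -> polyf k n) (p : polyf k n) : Prop :=
  is_spstar f u p /\
  forall (u' : 'I_d -> polyf k n) (p' : polyf k n) (lp' lp : lpair n d),
    is_spstar f u' p' -> LM_is leM leS u' p' lp' -> LM_is leM leS u p lp ->
    [/\ ~ prec_ms leS lp' lp, ~ prec_sm leM lp' lp &
        (super_div lp' lp -> lp' = lp)].

(* Main.v *)
Require Import Defs.
From HB Require Import structures.
From mathcomp Require Import all_boot all_order all_algebra.
From mathcomp Require Import zify.
From Stdlib Require Import Classical.

Lemma fin_nat (T : eqType) (R : nat -> T -> Prop) N :
  (forall v, v < N -> exists s : seq T, forall x, R v x -> x \in s) ->
  exists s : seq T, forall v x, v < N -> R v x -> x \in s.
Proof.
elim: N => [|N IH] H; first by exists [::].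
have [s1 Hs1] := IH (fun v vl => H v (ltnW vl)).
have [s2 Hs2] := H N (ltnSn N).
exists (s1 ++ s2) => v x vl Rx; rewrite mem_cat.
move: vl; rewrite ltnS leq_eqVlt => /orP [/eqP Ev|vl].
  by subst v; rewrite Hs2 ?orbT.
by rewrite (Hs1 v x vl Rx).
Qed.

Lemma fin_seq (K T : eqType) (R : K -> T -> Prop) (cs : seq K) :
  (forall c, c \in cs -> exists s : seq T, forall x, R c x -> x \in s) ->
  exists s : seq T, forall c x, c \in cs -> R c x -> x \in s.
Proof.
elim: cs => [|c cs IH] H; first by exists [::].
have [s1 Hs1] := IH (fun c' ci => H c' (@mem_behead _ (c :: cs) c' ci)).
have [s2 Hs2] := H c (mem_head _ _).
exists (s1 ++ s2) => c' x; rewrite in_cons mem_cat => /orP [/eqP Ec|ci] Rx.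
  by subst c'; rewrite Hs2 ?orbT.
by rewrite (Hs1 c' x ci Rx).
Qed.

Lemma antichain_fin (T K : eqType) (co : T -> K -> nat) : forall m (cs : seq K) (P : T -> Prop),
  size cs <= m ->
  (forall a b, P a -> P b -> all (fun c => co a c <= co b c) cs -> a = b) ->
  exists s : seq T, forall x, P x -> x \in s.
Proof.
elim=> [|m IH] cs P Hs Hanti;
 (case: (classic (exists a, P a)) => [[a Pa]|nP]; last first;
  [by exists [::] => x Px; exfalso; apply: nP; exists x|]).
  exists [:: a] => x Px; rewrite (Hanti a x Pa Px) ?mem_head //.
  by case: cs Hs {Hanti}.
have H1 : forall c : K, c \in cs -> exists s : seq T, forall x : T, (P x /\ co x c < co a c) -> x \in s.
  move=> c cin.
  have [v vlt|s Hs'] := @fin_nat T (fun v x => P x /\ co x c = v) (co a c).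
    apply: (IH (rem c cs)).
      by rewrite size_rem //; case: (size cs) Hs.
    move=> a' b' [Pa' Ea'] [Pb' Eb'] Hall; apply: Hanti => //.
    by rewrite (perm_all _ (perm_to_rem cin)) /= Ea' Eb' leqnn Hall.
  by exists s => x [Px lt]; exact: (Hs' (co x c) x lt (conj Px erefl)).
have [s Hs'] := @fin_seq K T (fun c x => P x /\ co x c < co a c) cs H1.
exists (a :: s) => x Px.
case: (boolP (all (fun c => co a c <= co x c) cs)) => Hall.
  by rewrite -(Hanti a x Pa Px Hall) mem_head.
move/allPn: Hall => [c cin]; rewrite -ltnNge => lt.
by rewrite in_cons (Hs' c x cin (conj Px lt)) orbT.
Qed.

Lemma mmulC n (a b : mono n) : mmul a b = mmul b a.
Proof. by apply/ffunP => j; rewrite !ffunE addnC. Qed.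

Lemma msubK n (a b : mono n) : mdiv a b -> mmul (msub b a) a = b.
Proof. by move/forallP => H; apply/ffunP => j; rewrite !ffunE subnK. Qed.

Lemma mmul_inj n (l l' a : mono n) : mmul l a = mmul l' a -> l = l'.
Proof.
move=> E; apply/ffunP => j; have := congr1 (fun g : mono n => g j) E.
by rewrite !ffunE => /addIn.
Qed.

Definition cok {n d : nat} (x : lpair n d) (c : ('I_n + 'I_n) + 'I_4) : nat :=
  match c with
  | inl (inl j) => x.1.1 j
  | inl (inr j) => if x.2 is Some m then m j else 0
  | inr t => match nat_of_ord t with
             | 0 => nat_of_ord x.1.2
             | 1 => d - x.1.2
             | 2 => nat_of_bool (isSome x.2)
             | _ => 1 - nat_of_bool (isSome x.2)
             end
  end.

Theorem mainTheorem6 (k : fieldType) (n d : nat) (f : 'I_d -> polyf k n)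
    (leM : mono n -> mono n -> Prop) (leS : mmono n d -> mmono n d -> Prop) :
  (forall i, is_poly (f i)) ->
  admissible_monomial_order leM ->
  admissible_module_order leS ->
  compatible leM leS ->
  exists S : seq (lpair n d),
    forall (u : 'I_d -> polyf k n) (p : polyf k n),
      top_irreducible f leM leS u p ->
      forall lp : lpair n d, LM_is leM leS u p lp -> lp \in S.
Proof.
move=> _ [[_ _ _ Htot] _ Hmon] _ Hcomp.
pose A := fun lp : lpair n d => exists u p, top_irreducible f leM leS u p /\ LM_is leM leS u p lp.
have key : forall a b, A a -> A b ->
    all (fun c => cok a c <= cok b c) (enum {: ('I_n + 'I_n) + 'I_4}) -> a = b.
  move=> [[s' i'] o'] [[s i] o] [u' [p' [[Hsp' _] LM']]] [u [p [[_ Hti] LM]]] Hall.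
  have H c : cok ((s', i'), o') c <= cok ((s, i), o) c.
    by move/allP: Hall; apply; rewrite mem_enum.
  have Hd : mdiv s' s by apply/forallP => j; exact: (H (inl (inl j))).
  have E0 := H (inr (@Ordinal 4 0 isT)); have E1 := H (inr (@Ordinal 4 1 isT)).
  have E2 := H (inr (@Ordinal 4 2 isT)); have E3 := H (inr (@Ordinal 4 3 isT)).
  rewrite /= in E0 E1 E2 E3.
  have Ei : i' = i.
    apply: val_inj => /=; have := ltn_ord i; have := ltn_ord i'; lia.
  subst i'.
  have [Hms Hsm Hsd] := Hti u' p' _ _ Hsp' LM' LM.
  clear Hall; case: o' o LM' LM H E2 E3 Hms Hsm Hsd => [m'|] [m|] /= LM' LM H E2 E3 Hms Hsm Hsd.
  2: by [].
  3: by apply: Hsd; rewrite /super_div /sdiv /= Hd andbT.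
  2: by exfalso; apply: Hsm; rewrite /prec_sm /sdiv /= Hd andbT.
  have Hd' : mdiv m' m by apply/forallP => j; exact: (H (inl (inr j))).
  set l1 := msub s s'; set l2 := msub m m'.
  have e1 : mmul l1 s' = s by exact: msubK.
  have e2 : mmul l2 m' = m by exact: msubK.
  case: (eqVneq l1 l2) => [El|Nl].
    apply: Hsd; rewrite /super_div /=; exists l1; rewrite /smul /= e1; split => //.
    by rewrite El.
  case: (Htot l1 l2) => Hle.
    exfalso; apply: Hsm; rewrite /prec_sm /=; exists l1; rewrite /smul /= e1; split => //; split.
      by rewrite -e2 mmulC (mmulC _ l2); exact: Hmon.
    by rewrite -e2 => /mmul_inj; apply/eqP.
  exfalso; apply: Hms; rewrite /prec_ms /=; exists l2; rewrite /smul /= e2; split => //; split.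
    apply/Hcomp; rewrite -e1 mmulC (mmulC _ l1); exact: Hmon.
  by rewrite -e1 => -[] /mmul_inj El; move: Nl; rewrite El eqxx.
have [S HS] := @antichain_fin (lpair n d) _ (@cok n d) _ _ A (leqnn _) key.
exists S => u p Hti lp LM; apply: HS; by exists u, p.
Qed.
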